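(* Let $K$ be a complete metric space and let $A$ be a closed subalgebra of $C_b(K)$. If $\rho A$ is a norming subset of $A$, then the set of all smooth points of the closed unit ball $B_A$ contains a dense $G_\delta$ subset of the unit sphere $S_A$.
   Context: $C_b(K)$ is the Banach space of bounded continuous scalar-valued functions on $K$ with the supremum norm. A nonzero $f\in C_b(K)$ is a strong peak function at $t\in K$ if every sequence $\{t_n\}$ in $K$ with $\lim_n|f(t_n)|=\|f\|$ converges to $t$. A point $t\in K$ is a strong peak point for $A$ if there is a strong peak function $f\in A$ with $\|f\|=|f(t)|$; $\rho A$ is the set of all strong peak points for $A$. A subset $F\subset K$ is a norming subset for $A$ if $\|f\|=\sup_{t\in F}|f(t)|$ for all $f\in A$. A point $x$ of the unit ball $B_Z$ of a Banach space $Z$ is a smooth point if there is a unique $z^*\in B_{Z^*}$ with $\operatorname{Re} z^*(x)=1$. *)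

(* Defs.v *)
From Stdlib Require Import Reals Lra Classical ClassicalEpsilon.
Open Scope R_scope.

(** The scalar field is
    selected by a boolean [isreal]: if [isreal = true] the scalars are the
    reals (pairs with zero imaginary part), otherwise all of C. *)
Definition Cx : Type := (R * R)%type.
Definition Cre (z : Cx) : R := fst z.
Definition Cim (z : Cx) : R := snd z.
Definition C0 : Cx := (0, 0).
Definition Cadd (z w : Cx) : Cx := (fst z + fst w, snd z + snd w).
Definition Copp (z : Cx) : Cx := (- fst z, - snd z).
Definition Cmul (z w : Cx) : Cx :=
  (fst z * fst w - snd z * snd w, fst z * snd w + snd z * fst w).
Definition Cmod (z : Cx) : R := sqrt (fst z ^ 2 + snd z ^ 2).

Definition scalar (isreal : bool) (z : Cx) : Prop :=
  if isreal then snd z = 0 else True.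

Definition is_metric {K : Type} (d : K -> K -> R) : Prop :=
  (forall x y, 0 <= d x y) /\
  (forall x y, d x y = 0 <-> x = y) /\
  (forall x y, d x y = d y x) /\
  (forall x y z, d x z <= d x y + d y z).

Definition seq_converges {K : Type} (d : K -> K -> R) (u : nat -> K) (l : K) : Prop :=
  forall eps, 0 < eps -> exists N, forall n, (N <= n)%nat -> d (u n) l < eps.

Definition is_Cauchy {K : Type} (d : K -> K -> R) (u : nat -> K) : Prop :=
  forall eps, 0 < eps -> exists N, forall m n, (N <= m)%nat -> (N <= n)%nat ->
    d (u m) (u n) < eps.

Definition complete_metric {K : Type} (d : K -> K -> R) : Prop :=
  forall u : nat -> K, is_Cauchy d u -> exists l, seq_converges d u l.

Definition fcont {K : Type} (d : K -> K -> R) (f : K -> Cx) : Prop :=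
  forall t eps, 0 < eps -> exists delta, 0 < delta /\
    forall s, d t s < delta -> Cmod (Cadd (f s) (Copp (f t))) < eps.

Definition fbounded {K : Type} (f : K -> Cx) : Prop :=
  exists M, forall t, Cmod (f t) <= M.

Definition Cb (isreal : bool) {K : Type} (d : K -> K -> R) (f : K -> Cx) : Prop :=
  (forall t, scalar isreal (f t)) /\ fcont d f /\ fbounded f.

(** Supremum norm (the least upper bound of {|f t|}; 0 is adjoined so that
    the norm of the function on an empty space is 0). *)
Definition supnorm {K : Type} (f : K -> Cx) : R :=
  epsilon (inhabits 0)
    (fun r => is_lub (fun y => y = 0 \/ exists t, y = Cmod (f t)) r).

Definition fadd {K : Type} (f g : K -> Cx) : K -> Cx := fun t => Cadd (f t) (g t).
Definition fsub {K : Type} (f g : K -> Cx) : K -> Cx := fun t => Cadd (f t) (Copp (g t)).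
Definition fmul {K : Type} (f g : K -> Cx) : K -> Cx := fun t => Cmul (f t) (g t).
Definition fscale {K : Type} (c : Cx) (f : K -> Cx) : K -> Cx := fun t => Cmul c (f t).
Definition fzero {K : Type} : K -> Cx := fun _ => C0.

Definition subalgebra (isreal : bool) {K : Type} (d : K -> K -> R)
  (A : (K -> Cx) -> Prop) : Prop :=
  (forall f, A f -> Cb isreal d f) /\
  A fzero /\
  (forall f g, A f -> A g -> A (fadd f g)) /\
  (forall c f, scalar isreal c -> A f -> A (fscale c f)) /\
  (forall f g, A f -> A g -> A (fmul f g)).

Definition closed_in_Cb (isreal : bool) {K : Type} (d : K -> K -> R)
  (A : (K -> Cx) -> Prop) : Prop :=
  forall (u : nat -> K -> Cx) (g : K -> Cx),
    (forall n, A (u n)) -> Cb isreal d g ->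
    Un_cv (fun n => supnorm (fsub (u n) g)) 0 -> A g.

Definition closed_subalgebra (isreal : bool) {K : Type} (d : K -> K -> R)
  (A : (K -> Cx) -> Prop) : Prop :=
  subalgebra isreal d A /\ closed_in_Cb isreal d A.

Definition strong_peak_function (isreal : bool) {K : Type} (d : K -> K -> R)
  (f : K -> Cx) (t : K) : Prop :=
  Cb isreal d f /\ (exists s, f s <> C0) /\
  forall u : nat -> K,
    Un_cv (fun n => Cmod (f (u n))) (supnorm f) -> seq_converges d u t.

Definition strong_peak_points (isreal : bool) {K : Type} (d : K -> K -> R)
  (A : (K -> Cx) -> Prop) (t : K) : Prop :=
  exists f, A f /\ strong_peak_function isreal d f t /\ supnorm f = Cmod (f t).

Definition norming {K : Type} (A : (K -> Cx) -> Prop) (F : K -> Prop) : Prop :=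
  forall f, A f ->
    is_lub (fun y => y = 0 \/ exists t, F t /\ y = Cmod (f t)) (supnorm f).

(** Closed unit ball B_A of the dual A^* : bounded scalar-linear functionals
    on A of norm at most 1.  Two functionals are identified when they agree on A. *)
Definition dual_ball (isreal : bool) {K : Type} (A : (K -> Cx) -> Prop)
  (phi : (K -> Cx) -> Cx) : Prop :=
  (forall f, A f -> scalar isreal (phi f)) /\
  (forall f g, A f -> A g -> phi (fadd f g) = Cadd (phi f) (phi g)) /\
  (forall c f, scalar isreal c -> A f -> phi (fscale c f) = Cmul c (phi f)) /\
  (forall f, A f -> Cmod (phi f) <= supnorm f).

Definition smooth_point (isreal : bool) {K : Type} (A : (K -> Cx) -> Prop)
  (x : K -> Cx) : Prop :=
  A x /\ supnorm x <= 1 /\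
  exists phi, dual_ball isreal A phi /\ Cre (phi x) = 1 /\
    forall psi, dual_ball isreal A psi -> Cre (psi x) = 1 ->
      forall f, A f -> psi f = phi f.

Definition unit_sphere {K : Type} (A : (K -> Cx) -> Prop) (x : K -> Cx) : Prop :=
  A x /\ supnorm x = 1.

Definition open_in_A {K : Type} (A : (K -> Cx) -> Prop) (U : (K -> Cx) -> Prop) : Prop :=
  forall x, A x -> U x -> exists eps, 0 < eps /\
    forall y, A y -> supnorm (fsub y x) < eps -> U y.

Definition dense_Gdelta_in {K : Type} (A : (K -> Cx) -> Prop)
  (S G : (K -> Cx) -> Prop) : Prop :=
  (forall x, G x -> S x) /\
  (exists U : nat -> (K -> Cx) -> Prop,
     (forall n, open_in_A A (U n)) /\
     forall x, G x <-> (S x /\ forall n, U n x)) /\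
  (forall x eps, S x -> 0 < eps -> exists g, G g /\ supnorm (fsub g x) < eps).

(* Main.v *)
Require Import Defs.
From Stdlib Require Import Reals Lra Psatz Classical ClassicalEpsilon FunctionalExtensionality.
Open Scope R_scope.

Lemma Cx_eq (z w : Cx) : fst z = fst w -> snd z = snd w -> z = w.
Proof. destruct z, w; simpl; intros; subst; auto. Qed.

Lemma Cmod_nonneg z : 0 <= Cmod z.
Proof. unfold Cmod; apply sqrt_pos. Qed.

Lemma Cmod_sq z : Cmod z * Cmod z = fst z ^ 2 + snd z ^ 2.
Proof. unfold Cmod. rewrite sqrt_sqrt; nra. Qed.

Lemma Cmod_eq0 z : Cmod z = 0 -> z = C0.
Proof. intro H. pose proof (Cmod_sq z). rewrite H in H0.
  apply Cx_eq; simpl; nra. Qed.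

Lemma Cmod_pos z : z <> C0 -> 0 < Cmod z.
Proof. intro H. destruct (Cmod_nonneg z); auto. exfalso; apply H, Cmod_eq0; auto. Qed.

Lemma Cmod_unique z r : 0 <= r -> r * r = fst z ^ 2 + snd z ^ 2 -> Cmod z = r.
Proof. intros. unfold Cmod. rewrite <- H0. apply sqrt_square; auto. Qed.

Lemma Cmod_le_sq z r : 0 <= r -> fst z ^ 2 + snd z ^ 2 <= r * r -> Cmod z <= r.
Proof. intros. unfold Cmod. rewrite <- (sqrt_square r) by auto.
  apply sqrt_le_1_alt; auto. Qed.

Lemma Cmod_mul z w : Cmod (Cmul z w) = Cmod z * Cmod w.
Proof. apply Cmod_unique. pose proof (Cmod_nonneg z); pose proof (Cmod_nonneg w); nra.
  transitivity ((Cmod z * Cmod z) * (Cmod w * Cmod w)). ring.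
  rewrite !Cmod_sq. destruct z, w; unfold Cmul; simpl; ring. Qed.

Lemma Cmod_add z w : Cmod (Cadd z w) <= Cmod z + Cmod w.
Proof. pose proof (Cmod_nonneg z); pose proof (Cmod_nonneg w).
  pose proof (Cmod_sq z); pose proof (Cmod_sq w).
  apply Cmod_le_sq. lra. destruct z as [a b], w as [c e]; unfold Cadd in *; simpl in *.
  assert (a*c + b*e <= Cmod (a,b) * Cmod (c,e)).
  { assert ((a*c+b*e)*(a*c+b*e) <= (Cmod (a,b) * Cmod (c,e))*(Cmod (a,b) * Cmod (c,e))).
    { replace ((Cmod (a,b) * Cmod (c,e))*(Cmod (a,b) * Cmod (c,e))) with
        ((Cmod (a,b) * Cmod (a,b))*(Cmod (c,e) * Cmod (c,e))) by ring.
      rewrite H1, H2. simpl. pose proof (pow2_ge_0 (a*e-b*c)). nra. }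
    assert (0 <= Cmod (a,b) * Cmod (c,e)) by (apply Rmult_le_pos; apply Cmod_nonneg).
    destruct (Rle_dec (a*c+b*e) (Cmod (a,b) * Cmod (c,e))); auto.
    exfalso. assert (Cmod (a,b) * Cmod (c,e) < a*c+b*e) by lra.
    assert ((Cmod (a,b) * Cmod (c,e))*(Cmod (a,b) * Cmod (c,e)) < (a*c+b*e)*(a*c+b*e)).
    { apply Rmult_le_0_lt_compat; lra. } lra. }
  simpl. transitivity (Cmod (a,b)*Cmod (a,b) + Cmod (c,e) * Cmod (c,e) + 2 * (a*c+b*e)).
  rewrite H1, H2; simpl; lra. lra. Qed.

Lemma Cmod_opp z : Cmod (Copp z) = Cmod z.
Proof. unfold Cmod, Copp; simpl; f_equal; ring. Qed.

Lemma Cmod_real a : Cmod (a, 0) = Rabs a.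
Proof. unfold Cmod; simpl. rewrite <- sqrt_Rsqr_abs. f_equal. unfold Rsqr; ring. Qed.

Lemma Cmod_fst z : Rabs (fst z) <= Cmod z.
Proof. rewrite <- Cmod_real. apply Cmod_le_sq. apply Cmod_nonneg. rewrite Cmod_sq.
  simpl. nra. Qed.
Lemma Cmod_snd z : Rabs (snd z) <= Cmod z.
Proof. rewrite <- Cmod_real. apply Cmod_le_sq. apply Cmod_nonneg. rewrite Cmod_sq.
  simpl. nra. Qed.

Definition Csub z w := Cadd z (Copp w).

Lemma Cmod_sub_sym z w : Cmod (Cadd z (Copp w)) = Cmod (Cadd w (Copp z)).
Proof. unfold Cmod, Cadd, Copp; simpl; f_equal; ring. Qed.

Lemma Cdist_tri a b c : Cmod (Cadd a (Copp c)) <= Cmod (Cadd a (Copp b)) + Cmod (Cadd b (Copp c)).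
Proof. replace (Cadd a (Copp c)) with (Cadd (Cadd a (Copp b)) (Cadd b (Copp c))).
  apply Cmod_add. apply Cx_eq; simpl; ring. Qed.

Lemma Cmod_le_add a b : Cmod a <= Cmod b + Cmod (Cadd a (Copp b)).
Proof. replace a with (Cadd b (Cadd a (Copp b))) at 1. apply Cmod_add.
  apply Cx_eq; simpl; ring. Qed.

Definition SNset {K} (f : K -> Cx) := fun y => y = 0 \/ exists t, y = Cmod (f t).

Lemma SN_lub {K} (f : K -> Cx) M : (forall s, Cmod (f s) <= M) -> is_lub (SNset f) (supnorm f).
Proof. intro HM. unfold supnorm.
  apply epsilon_spec.
  destruct (completeness (SNset f)) as [m Hm].
  - exists (Rmax 0 M). intros y [->|[t ->]]. apply Rmax_l. eapply Rle_trans; [apply HM|apply Rmax_r].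
  - exists 0; left; auto.
  - exists m; exact Hm.
Qed.

Lemma SN_ge {K} (f : K -> Cx) M s : (forall s, Cmod (f s) <= M) -> Cmod (f s) <= supnorm f.
Proof. intro HM. destruct (SN_lub f M HM) as [H1 H2]. apply H1. right; eauto. Qed.

Lemma SN_nonneg {K} (f : K -> Cx) M : (forall s, Cmod (f s) <= M) -> 0 <= supnorm f.
Proof. intro HM. destruct (SN_lub f M HM) as [H1 H2]. apply H1. left; auto. Qed.

Lemma SN_le {K} (f : K -> Cx) B : (forall s, Cmod (f s) <= B) -> 0 <= B -> supnorm f <= B.
Proof. intros HB H0. destruct (SN_lub f B HB) as [H1 H2]. apply H2.
  intros y [->|[t ->]]; auto. Qed.

Lemma SN_approx {K} (f : K -> Cx) a : 0 <= a -> a < supnorm f -> exists s, a < Cmod (f s).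
Proof. intros Ha Hlt. apply NNPP; intro Hn.
  assert (forall s, Cmod (f s) <= a). { intro s. apply Rnot_lt_le. intro; apply Hn; eauto. }
  pose proof (SN_le f a H Ha). lra. Qed.

Definition bnd {K} (f : K -> Cx) := exists M, forall s, Cmod (f s) <= M.

Lemma SN_ge' {K} (f : K -> Cx) s : bnd f -> Cmod (f s) <= supnorm f.
Proof. intros [M HM]; eapply SN_ge; eauto. Qed.
Lemma SN_nonneg' {K} (f : K -> Cx) : bnd f -> 0 <= supnorm f.
Proof. intros [M HM]; eapply SN_nonneg; eauto. Qed.

Lemma bnd_sub {K} (f g : K -> Cx) : bnd f -> bnd g -> bnd (fsub f g).
Proof. intros [M HM] [N HN]. exists (M + N). intro s. unfold fsub.
  eapply Rle_trans. apply Cmod_add. rewrite Cmod_opp. specialize (HM s); specialize (HN s); lra. Qed.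

Lemma SN_sym {K} (f g : K -> Cx) : bnd f -> bnd g -> supnorm (fsub f g) = supnorm (fsub g f).
Proof. intros Hf Hg. apply Rle_antisym; apply SN_le.
  - intro s. unfold fsub. rewrite Cmod_sub_sym. apply (SN_ge' (fsub g f)). apply bnd_sub; auto.
  - apply SN_nonneg'; apply bnd_sub; auto.
  - intro s. unfold fsub. rewrite Cmod_sub_sym. apply (SN_ge' (fsub f g)). apply bnd_sub; auto.
  - apply SN_nonneg'; apply bnd_sub; auto.
Qed.

Lemma SN_tri {K} (f g h : K -> Cx) : bnd f -> bnd g -> bnd h ->
  supnorm (fsub f h) <= supnorm (fsub f g) + supnorm (fsub g h).
Proof. intros Hf Hg Hh. apply SN_le.
  - intro s. unfold fsub. eapply Rle_trans. apply (Cdist_tri _ (g s)).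
    apply Rplus_le_compat; [apply (SN_ge' (fsub f g))|apply (SN_ge' (fsub g h))]; apply bnd_sub; auto.
  - pose proof (SN_nonneg' (fsub f g)); pose proof (SN_nonneg' (fsub g h));
    assert (bnd (fsub f g)) by (apply bnd_sub; auto); assert (bnd (fsub g h)) by (apply bnd_sub; auto); intuition lra.
Qed.

Lemma SN_rev {K} (f g : K -> Cx) : bnd f -> bnd g -> supnorm g <= supnorm f + supnorm (fsub g f).
Proof. intros Hf Hg. apply SN_le.
  - intro s. eapply Rle_trans. apply (Cmod_le_add _ (f s)).
    apply Rplus_le_compat; [apply SN_ge'; auto| apply (SN_ge' (fsub g f)); apply bnd_sub; auto].
  - pose proof (SN_nonneg' f Hf); pose proof (SN_nonneg' (fsub g f) (bnd_sub _ _ Hg Hf)); lra.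
Qed.

Definition Uset {K} (d : K -> K -> R) (n : nat) (x : K -> Cx) : Prop :=
  exists del, 0 < del /\ forall s1 s2, supnorm x - del < Cmod (x s1) ->
     supnorm x - del < Cmod (x s2) -> d s1 s2 < / INR (S n).

Lemma U_open {K} (d : K -> K -> R) (A : (K -> Cx) -> Prop) n :
  (forall f, A f -> bnd f) -> open_in_A A (Uset d n).
Proof. intros HAb x Ax [del [Hdel Hx]]. exists (del/3). split. lra.
  intros y Ay Hyx. exists (del/3). split. lra.
  pose proof (HAb x Ax) as Bx. pose proof (HAb y Ay) as By.
  assert (Hn : supnorm x <= supnorm y + supnorm (fsub x y)) by (apply SN_rev; auto).
  rewrite (SN_sym x y) in Hn by auto.
  assert (Hp : forall s, supnorm y - del/3 < Cmod (y s) -> supnorm x - del < Cmod (x s)).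
  { intros s Hs. pose proof (Cmod_le_add (y s) (x s)).
    pose proof (SN_ge' (fsub y x) s (bnd_sub _ _ By Bx)). change (fsub y x s) with (Cadd (y s) (Copp (x s))) in H0. lra. }
  intros s1 s2 H1 H2. apply Hx; auto.
Qed.

Lemma arch_inv eps : 0 < eps -> exists N, / INR (S N) < eps.
Proof. intro He. destruct (INR_archimed eps 1 He) as [n Hn].
  exists n. rewrite S_INR. pose proof (pos_INR n).
  apply (Rmult_lt_reg_r (INR n + 1)). lra. rewrite Rinv_l by lra. nra. Qed.

Lemma inv_S_pos N : 0 < / INR (S N).
Proof. apply Rinv_0_lt_compat. apply lt_0_INR. lia. Qed.

Lemma inv_S_le N M : (N <= M)%nat -> / INR (S M) <= / INR (S N).
Proof. intro. apply Rinv_le_contravar. apply lt_0_INR; lia. apply le_INR; lia. Qed.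

Lemma choice_fun {X Y : Type} (P : X -> Y -> Prop) : (forall x, exists y, P x y) ->
  exists f : X -> Y, forall x, P x (f x).
Proof. intro H. exists (fun x => proj1_sig (constructive_indefinite_description _ (H x))).
  intro x. exact (proj2_sig (constructive_indefinite_description _ (H x))). Qed.

Lemma lim_le (v : nat -> R) l B k : Un_cv v l -> (forall m, (k <= m)%nat -> v m <= B) -> l <= B.
Proof. intros Hv HB. apply Rnot_lt_le. intro Hlt.
  destruct (Hv (l - B)) as [N HN]. lra.
  specialize (HN (Nat.max N k) ltac:(lia)). specialize (HB (Nat.max N k) ltac:(lia)).
  unfold R_dist in HN. apply Rabs_def2 in HN. lra. Qed.

Lemma geom_small r0 eps : 0 < eps -> exists N, r0 * (/2)^N < eps.
Proof. intro He. destruct (Rle_dec r0 0).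
  - exists 0%nat. simpl. lra.
  - destruct (pow_lt_1_zero (/2) ltac:(rewrite Rabs_pos_eq; lra) (eps / r0)) as [N HN].
    apply Rdiv_lt_0_compat; lra.
    exists N. specialize (HN N (le_n _)). rewrite Rabs_pos_eq in HN.
    apply (Rmult_lt_compat_l r0) in HN; [|lra]. unfold Rdiv in HN.
    rewrite <- Rmult_assoc, (Rmult_comm r0 eps), Rmult_assoc, Rinv_r, Rmult_1_r in HN; lra.
    apply pow_le; lra.
Qed.

Lemma peak_sharp isreal {K} (d : K -> K -> R) (F : K -> Cx) t rho :
  strong_peak_function isreal d F t -> supnorm F = Cmod (F t) -> bnd F -> 0 < rho ->
  exists beta, 0 < beta /\ forall s, Cmod (F t) - beta < Cmod (F s) -> d s t < rho.
Proof. intros [_ [_ SP]] Hsup BF Hrho. apply NNPP; intro Hn.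
  assert (H1 : forall k : nat, exists s, Cmod (F t) - / INR (S k) < Cmod (F s) /\ ~ d s t < rho).
  { intro k. apply NNPP; intro Hk. apply Hn. exists (/ INR (S k)). split. apply inv_S_pos.
    intros s Hs. apply NNPP; intro; apply Hk; eauto. }
  apply choice_fun in H1. destruct H1 as [u Hu].
  assert (Hc : Un_cv (fun k => Cmod (F (u k))) (supnorm F)).
  { intros eps He. destruct (arch_inv eps He) as [N HN]. exists N. intros k Hk.
    unfold R_dist. destruct (Hu k) as [Hk1 _]. pose proof (SN_ge' F (u k) BF).
    pose proof (inv_S_le N k Hk). rewrite Rabs_left1; lra. }
  destruct (SP u Hc rho Hrho) as [N HN]. destruct (Hu N) as [_ Hf]. apply Hf, HN; lia.
Qed.

Fixpoint fpow {K} (G : K -> Cx) (m : nat) : K -> Cx :=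
  match m with O => G | S m => fmul G (fpow G m) end.

Lemma fpow_A isreal {K} (d : K -> K -> R) A G m : subalgebra isreal d A -> A G -> A (fpow G m).
Proof. intros [_ [_ [_ [_ HM]]]] HG. induction m; simpl; auto. Qed.

Lemma fpow_mod {K} (G : K -> Cx) m s : Cmod (fpow G m s) = Cmod (G s) ^ (S m).
Proof. induction m; simpl. ring. unfold fmul. rewrite Cmod_mul, IHm. simpl; ring. Qed.

Lemma fpow_one {K} (G : K -> Cx) m t : G t = (1,0) -> fpow G m t = (1,0).
Proof. intro H. induction m; simpl; auto. unfold fmul. rewrite IHm, H.
  unfold Cmul; simpl; apply Cx_eq; simpl; ring. Qed.

Lemma pow_le1 x n : 0 <= x <= 1 -> x ^ n <= 1.
Proof. intro. rewrite <- (pow1 n). apply pow_incr. lra. Qed.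

Lemma Rdiv_le_0_compat x y : 0 <= x -> 0 < y -> 0 <= x / y.
Proof. intros. unfold Rdiv. apply Rmult_le_pos; auto. left; apply Rinv_0_lt_compat; auto. Qed.

Lemma A_bnd isreal {K} (d : K -> K -> R) A : closed_subalgebra isreal d A -> forall f, A f -> bnd f.
Proof. intros [[HC _] _] f Af. destruct (HC f Af) as [_ [_ Hb]]. exact Hb. Qed.

Lemma A_scal isreal {K} (d : K -> K -> R) A : closed_subalgebra isreal d A -> forall f t, A f -> scalar isreal (f t).
Proof. intros [[HC _] _] f t Af. destruct (HC f Af) as [Hs _]. auto. Qed.

Lemma dense_step isreal {K} (d : K -> K -> R) (Hd : is_metric d) A
  (HA : closed_subalgebra isreal d A) (Hnorm : norming A (strong_peak_points isreal d A))
  n h r : A h -> 0 < r -> r < supnorm h ->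
  exists h', A h' /\ Uset d n h' /\ supnorm (fsub h' h) < r.
Proof.
  intros Ah Hr Hrh.
  pose proof (A_bnd _ _ _ HA) as HAb. pose proof (A_scal _ _ _ HA) as HAs.
  destruct HA as [[HC [H0 [Hadd [Hsc Hmul]]]] Hcl].
  set (c := r / 2).
  assert (Ht : exists t, strong_peak_points isreal d A t /\ supnorm h - c/4 < Cmod (h t)).
  { apply NNPP; intro Hn. destruct (Hnorm h Ah) as [_ Hl].
    assert (supnorm h <= supnorm h - c/4).
    { apply Hl. intros y [->|[t [Ht ->]]]. unfold c; lra.
      apply Rnot_lt_le; intro; apply Hn; eauto. }
    unfold c in H; lra. }
  destruct Ht as [t [[F [AF [SPF Hsup]]] Hht]].
  pose proof (HAb F AF) as BF. pose proof (HAb h Ah) as Bh.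
  set (a := Cmod (F t)).
  assert (Ha : 0 < a).
  { destruct SPF as [_ [[s Hs] _]]. pose proof (Cmod_pos _ Hs). pose proof (SN_ge' F s BF).
    unfold a; lra. }
  set (rho := / (2 * INR (S n))).
  assert (Hrho : 0 < rho). { unfold rho. apply Rinv_0_lt_compat. pose proof (inv_S_pos n).
    pose proof (lt_0_INR (S n) ltac:(lia)). lra. }
  destruct (peak_sharp isreal d F t rho SPF Hsup BF Hrho) as [beta [Hb Hpeak]].
  set (b' := Rmin beta a).
  assert (Hb' : 0 < b' <= a). { unfold b'. split. apply Rmin_glb_lt; lra. apply Rmin_r. }
  set (q := 1 - b' / a).
  assert (Hq : 0 <= q < 1). { unfold q. split.
    assert (b'/a <= 1). { apply (Rmult_le_reg_r a); auto. unfold Rdiv. rewrite Rmult_assoc, Rinv_l; lra. } lra.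
    assert (0 < b'/a) by (apply Rdiv_lt_0_compat; lra). lra. }
  destruct (pow_lt_1_zero q ltac:(rewrite Rabs_pos_eq; lra) (1/4) ltac:(lra)) as [N HN].
  set (f1 := fst (F t)). set (f2 := snd (F t)).
  assert (Ha2 : a * a = f1 ^ 2 + f2 ^ 2) by (unfold a; apply Cmod_sq).
  set (mu := (f1 / (a*a), - f2 / (a*a))).
  assert (Hmu_s : scalar isreal mu).
  { pose proof (HAs F t AF). unfold scalar in *. destruct isreal; auto. unfold mu; simpl.
    fold f2 in H. rewrite H. field. lra. }
  assert (Hmu_m : Cmod mu = / a).
  { apply Cmod_unique. left; apply Rinv_0_lt_compat; auto. unfold mu; simpl.
    field_simplify_eq; try lra. }
  set (G := fscale mu F).
  assert (AG : A G) by (apply Hsc; auto).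
  assert (Gt : G t = (1, 0)).
  { unfold G, fscale, mu, Cmul. apply Cx_eq; simpl; fold f1 f2. field_simplify_eq; try lra; try (simpl in Ha2; lra). field; lra. }
  assert (Gm : forall s, Cmod (G s) = Cmod (F s) / a).
  { intro s. unfold G, fscale. rewrite Cmod_mul, Hmu_m. unfold Rdiv; ring. }
  set (H := fpow G N).
  assert (AH : A H) by (apply (fpow_A isreal d A G N (conj HC (conj H0 (conj Hadd (conj Hsc Hmul)))) AG)).
  assert (Ht1 : H t = (1,0)) by (apply fpow_one; auto).
  assert (Hm : forall s, Cmod (H s) = (Cmod (F s) / a) ^ (S N)).
  { intro s. unfold H. rewrite fpow_mod, Gm. auto. }
  assert (Hle1 : forall s, Cmod (H s) <= 1).
  { intro s. rewrite Hm. apply pow_le1. split. apply Rdiv_le_0_compat; auto; apply Cmod_nonneg.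
    apply (Rmult_le_reg_r a); auto. unfold Rdiv. rewrite Rmult_assoc, Rinv_l by lra.
    rewrite Rmult_1_l, Rmult_1_r. unfold a; rewrite <- Hsup. apply SN_ge'; auto. }
  set (bb := Cmod (h t)).
  assert (Hbb : 0 < bb). { unfold bb, c in *. lra. }
  set (h1 := fst (h t)). set (h2 := snd (h t)).
  assert (Hb2 : bb * bb = h1 ^ 2 + h2 ^ 2) by (unfold bb; apply Cmod_sq).
  set (kap := (c * h1 / bb, c * h2 / bb)).
  assert (Hk_s : scalar isreal kap).
  { pose proof (HAs h t Ah). unfold scalar in *. destruct isreal; auto. unfold kap; simpl.
    fold h2 in H1. rewrite H1. field. lra. }
  assert (Hk_m : Cmod kap = c).
  { apply Cmod_unique. unfold c; lra. unfold kap; simpl. field_simplify_eq; try lra; try (simpl in Hb2; nra). }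
  set (h' := fadd h (fscale kap H)).
  assert (Ah' : A h') by (apply Hadd; auto).
  pose proof (HAb h' Ah') as Bh'.
  assert (Hh't : Cmod (h' t) = bb + c).
  { unfold h', fadd, fscale. rewrite Ht1. apply Cmod_unique. unfold c; lra.
    unfold kap, Cadd, Cmul; simpl. fold h1 h2. field_simplify_eq; try lra. assert (E: h1^2 = bb*bb - h2^2) by lra; rewrite E; ring. }
  assert (Hdiff : forall s, Cmod (fsub h' h s) = c * Cmod (H s)).
  { intro s. unfold fsub, h', fadd, fscale. rewrite <- Hk_m, <- Cmod_mul. f_equal.
    apply Cx_eq; simpl; ring. }
  assert (Hup : forall s, Cmod (h' s) <= supnorm h + c * Cmod (H s)).
  { intro s. unfold h', fadd, fscale. eapply Rle_trans. apply Cmod_add.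
    rewrite Cmod_mul, Hk_m. pose proof (SN_ge' h s Bh). lra. }
  exists h'. split; [auto|split].
  - exists (c/2). split. unfold c; lra.
    assert (Hclose : forall s, supnorm h' - c/2 < Cmod (h' s) -> d s t < rho).
    { intros s Hs. pose proof (SN_ge' h' t Bh'). rewrite Hh't in H1.
      pose proof (Hup s).
      assert (Hq4 : 1/4 < Cmod (H s)).
      { apply (Rmult_lt_reg_l c). unfold c; lra. change (Cmod (h t)) with bb in Hht. lra. }
      apply NNPP; intro Hfar.
      assert (HFs : Cmod (F s) <= a - beta).
      { apply Rnot_lt_le. intro; apply Hfar, Hpeak; auto. }
      assert (Hrat : 0 <= Cmod (F s) / a <= q).
      { split. apply Rdiv_le_0_compat; auto; apply Cmod_nonneg.
        apply (Rmult_le_reg_r a); auto. unfold Rdiv. rewrite Rmult_assoc, Rinv_l by lra.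
        unfold q. assert (b' <= beta) by apply Rmin_l.
        replace ((1 - b' / a) * a) with (a - b') by (field; lra). lra. }
      specialize (HN (S N) ltac:(lia)). rewrite Rabs_pos_eq in HN by (apply pow_le; lra).
      rewrite Hm in Hq4. assert ((Cmod (F s) / a) ^ S N <= q ^ S N) by (apply pow_incr; lra).
      lra. }
    intros s1 s2 H1 H2. destruct Hd as [_ [_ [Hsym Htri]]].
    pose proof (Hclose s1 H1). pose proof (Hclose s2 H2).
    eapply Rle_lt_trans. apply (Htri s1 t s2). rewrite (Hsym t s2).
    replace (/ INR (S n)) with (2 * rho). lra. unfold rho. field.
    pose proof (lt_0_INR (S n) ltac:(lia)). lra.
  - apply Rle_lt_trans with c. apply SN_le. intro s. rewrite Hdiff. pose proof (Hle1 s).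
    unfold c in *; nra. unfold c; lra. unfold c; lra.
Qed.

Lemma cv_const c : Un_cv (fun _ => c) c.
Proof. intros eps He. exists 0%nat. intros. unfold R_dist. rewrite Rminus_diag, Rabs_R0. auto. Qed.

Lemma lim_const_eq v l c : Un_cv v l -> (forall m, v m = c) -> l = c.
Proof. intros Hv Hc. apply (UL_sequence v); auto.
  replace v with (fun _ : nat => c). apply cv_const.
  apply functional_extensionality; intro; rewrite Hc; auto. Qed.

Lemma Cmod_self z : Cmod (Cadd z (Copp z)) = 0.
Proof. apply Cmod_unique. lra. simpl. ring. Qed.

Lemma complete_lim isreal {K} (d : K -> K -> R) A
  (HA : closed_subalgebra isreal d A) (h : nat -> K -> Cx) (r : nat -> R) :
  (forall k, A (h k)) -> (forall k, 0 < r k) -> (forall k, r (S k) <= r k / 2) ->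
  (forall k, supnorm (fsub (h (S k)) (h k)) < r k / 4) ->
  exists g, A g /\ forall k, supnorm (fsub g (h k)) < r k.
Proof.
  intros Ah Hr Hr2 Hst.
  pose proof (A_bnd _ _ _ HA) as HAb. pose proof (A_scal _ _ _ HA) as HAs.
  assert (Bh : forall k, bnd (h k)) by (intro; apply HAb; auto).
  assert (Hpt : forall k s, Cmod (Cadd (h (S k) s) (Copp (h k s))) < r k / 4).
  { intros k s. eapply Rle_lt_trans; [|apply (Hst k)]. apply (SN_ge' (fsub (h (S k)) (h k))).
    apply bnd_sub; auto. }
  assert (Htel : forall j k s, Cmod (Cadd (h (k+j)%nat s) (Copp (h k s))) <= r k / 2 - r (k+j)%nat / 2).
  { induction j; intros k s.
    - rewrite Nat.add_0_r, Cmod_self. lra.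
    - replace (k + S j)%nat with (S (k + j)) by lia.
      eapply Rle_trans. apply (Cdist_tri _ (h (k+j)%nat s)).
      pose proof (Hpt (k+j)%nat s). pose proof (IHj k s). pose proof (Hr2 (k+j)%nat). lra. }
  assert (Htel' : forall m k s, (k <= m)%nat -> Cmod (Cadd (h m s) (Copp (h k s))) <= r k / 2).
  { intros m k s Hkm. replace m with (k + (m - k))%nat by lia.
    pose proof (Htel (m-k)%nat k s). pose proof (Hr (k + (m-k))%nat). lra. }
  assert (Hrmono : forall j k, r (k + j)%nat <= r k).
  { induction j; intro k. rewrite Nat.add_0_r; lra.
    replace (k + S j)%nat with (S (k+j)) by lia. pose proof (Hr2 (k+j)%nat). pose proof (Hr (k+j)%nat).
    specialize (IHj k). lra. }
  assert (Hrgeo : forall k, r k <= r 0%nat * (/2)^k).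
  { induction k. simpl; lra. simpl. pose proof (Hr2 k). lra. }
  assert (Hrsmall : forall eps, 0 < eps -> exists k, r k < eps).
  { intros eps He. destruct (geom_small (r 0%nat) eps He) as [k Hk]. exists k.
    pose proof (Hrgeo k). lra. }
  assert (Hcau : forall s n m k, (k <= n)%nat -> (k <= m)%nat ->
     Cmod (Cadd (h n s) (Copp (h m s))) <= r k).
  { intros s n m k Hn Hm. eapply Rle_trans. apply (Cdist_tri _ (h k s)).
    rewrite (Cmod_sub_sym (h k s)). pose proof (Htel' n k s Hn). pose proof (Htel' m k s Hm). lra. }
  set (L1 := fun s => epsilon (inhabits 0) (fun l => Un_cv (fun m => fst (h m s)) l)).
  set (L2 := fun s => epsilon (inhabits 0) (fun l => Un_cv (fun m => snd (h m s)) l)).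
  assert (HL1 : forall s, Un_cv (fun m => fst (h m s)) (L1 s)).
  { intro s. unfold L1. apply epsilon_spec.
    destruct (R_complete (fun m => fst (h m s))) as [l Hl]; [|exists l; auto].
    intros eps He. destruct (Hrsmall eps He) as [k Hk]. exists k. intros n m Hn Hm.
    unfold R_dist. eapply Rle_lt_trans; [|apply Hk]. eapply Rle_trans; [|apply (Hcau s n m k); auto].
    apply (Cmod_fst (Cadd (h n s) (Copp (h m s)))). }
  assert (HL2 : forall s, Un_cv (fun m => snd (h m s)) (L2 s)).
  { intro s. unfold L2. apply epsilon_spec.
    destruct (R_complete (fun m => snd (h m s))) as [l Hl]; [|exists l; auto].
    intros eps He. destruct (Hrsmall eps He) as [k Hk]. exists k. intros n m Hn Hm.
    unfold R_dist. eapply Rle_lt_trans; [|apply Hk]. eapply Rle_trans; [|apply (Hcau s n m k); auto].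
    apply (Cmod_snd (Cadd (h n s) (Copp (h m s)))). }
  set (g := fun s => (L1 s, L2 s)).
  assert (Hgk : forall k s, Cmod (Cadd (g s) (Copp (h k s))) <= r k / 2).
  { intros k s. pose proof (Hr k). apply Cmod_le_sq. lra.
    set (a := fst (h k s)). set (b := snd (h k s)).
    assert (Hv : Un_cv (fun m => (fst (h m s) - a) * (fst (h m s) - a) + (snd (h m s) - b) * (snd (h m s) - b))
        ((L1 s - a) * (L1 s - a) + (L2 s - b) * (L2 s - b))).
    { apply CV_plus; apply CV_mult; apply CV_minus; auto using cv_const. }
    pose proof (lim_le _ _ (r k / 2 * (r k / 2)) k Hv) as HH.
    eapply Rle_trans; [apply Req_le | apply HH]. unfold g; simpl; fold a b; ring. intros m Hm. pose proof (Htel' m k s Hm).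
    pose proof (Cmod_sq (Cadd (h m s) (Copp (h k s)))). simpl in H1. fold a b in H1.
    pose proof (Cmod_nonneg (Cadd (h m s) (Copp (h k s)))).
    assert (Cmod (Cadd (h m s) (Copp (h k s))) * Cmod (Cadd (h m s) (Copp (h k s))) <= r k / 2 * (r k / 2))
      by (apply Rmult_le_compat; lra).
    nra. }
  assert (Cbg : Cb isreal d g).
  { split; [|split].
    - intro s. unfold scalar. destruct isreal eqn:Ei; auto. unfold g; simpl.
      apply (lim_const_eq _ _ 0 (HL2 s)). intro m. pose proof (HAs (h m) s (Ah m)).
      unfold scalar in H; try rewrite Ei in H; auto.
    - intros t eps He. destruct (Hrsmall (eps/2) ltac:(lra)) as [k Hk].
      destruct (HA) as [[HC _] _]. destruct (HC (h k) (Ah k)) as [_ [Hc _]].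
      destruct (Hc t (eps/2) ltac:(lra)) as [del [Hdel Hd']]. exists del. split; auto.
      intros s Hs. eapply Rle_lt_trans. apply (Cdist_tri _ (h k s)).
      eapply Rle_lt_trans. apply Rplus_le_compat_l. apply (Cdist_tri _ (h k t)).
      pose proof (Hgk k s). pose proof (Hd' s Hs). pose proof (Hgk k t).
      rewrite Cmod_sub_sym in H1. pose proof (Hr k). lra.
    - destruct (Bh 0%nat) as [M HM]. exists (M + r 0%nat / 2). intro s.
      eapply Rle_trans. apply (Cmod_le_add _ (h 0%nat s)). pose proof (HM s). pose proof (Hgk 0%nat s). lra. }
  assert (Ag : A g).
  { destruct HA as [_ Hcl]. apply (Hcl h g Ah Cbg).
    intros eps He. destruct (Hrsmall eps He) as [k Hk]. exists k. intros n Hn.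
    assert (Hs : supnorm (fsub (h n) g) <= r n / 2).
    { apply SN_le. intro s. unfold fsub. rewrite Cmod_sub_sym. apply Hgk. pose proof (Hr n); lra. }
    assert (0 <= supnorm (fsub (h n) g)). { apply SN_nonneg'. apply bnd_sub. auto. destruct Cbg as [_ [_ Hb]]; exact Hb. }
    unfold R_dist. rewrite Rminus_0_r, Rabs_pos_eq by auto.
    pose proof (Hrmono (n - k)%nat k). replace (k + (n - k))%nat with n in H0 by lia. pose proof (Hr n). lra. }
  exists g. split; auto. intro k. apply Rle_lt_trans with (r k / 2).
  apply SN_le. intro s. apply Hgk. pose proof (Hr k); lra. pose proof (Hr k); lra.
Qed.

Lemma peak_of_U {K} (d : K -> K -> R) (Hd : is_metric d) (Hcomp : complete_metric d)
  (x : K -> Cx) : bnd x -> supnorm x = 1 -> (forall n, Uset d n x) -> fcont d x ->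
  exists t, Cmod (x t) = 1 /\
    forall eta, 0 < eta -> exists del, 0 < del /\ forall s, 1 - del < Cmod (x s) -> d s t < eta.
Proof.
  intros Bx Hx1 HU Hc. destruct Hd as [Hd0 [Hdeq [Hsym Htri]]].
  apply choice_fun in HU. destruct HU as [del Hdel].
  assert (Hs : forall k, exists s, 1 - / INR (S k) < Cmod (x s)).
  { intro k. apply SN_approx. pose proof (inv_S_le 0 k ltac:(lia)).
    replace (/ INR 1) with 1 in H by (simpl; rewrite Rinv_1; auto). lra.
    pose proof (inv_S_pos k). lra. }
  apply choice_fun in Hs. destruct Hs as [u Hu].
  assert (HM : forall N, exists M, forall k, (M <= k)%nat -> 1 - del N < Cmod (x (u k))).
  { intro N. destruct (Hdel N) as [HdN _]. destruct (arch_inv _ HdN) as [M HM']. exists M.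
    intros k Hk. pose proof (Hu k). pose proof (inv_S_le M k Hk). lra. }
  apply choice_fun in HM. destruct HM as [M HM].
  assert (Hcau : is_Cauchy d u).
  { intros eps He. destruct (arch_inv eps He) as [N HN]. exists (M N). intros m k Hm Hk.
    destruct (Hdel N) as [_ HdN]. rewrite Hx1 in HdN.
    pose proof (HdN (u m) (u k) (HM N m Hm) (HM N k Hk)). lra. }
  destruct (Hcomp u Hcau) as [t Ht]. exists t. split.
  - apply Rle_antisym. rewrite <- Hx1. apply SN_ge'; auto.
    apply Rnot_lt_le. intro Hlt. set (e := (1 - Cmod (x t)) / 2).
    destruct (Hc t e ltac:(unfold e; lra)) as [dl [Hdl Hdl']].
    destruct (Ht dl Hdl) as [N1 HN1]. destruct (arch_inv e ltac:(unfold e; lra)) as [N2 HN2].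
    set (k := Nat.max N1 N2).
    pose proof (HN1 k ltac:(unfold k; lia)). rewrite Hsym in H.
    pose proof (Hdl' (u k) H). pose proof (Cmod_le_add (x (u k)) (x t)).
    pose proof (Hu k). pose proof (inv_S_le N2 k ltac:(unfold k; lia)). unfold e in *. lra.
  - intros eta He. destruct (arch_inv (eta/2) ltac:(lra)) as [N HN].
    destruct (Hdel N) as [HdN0 HdN]. rewrite Hx1 in HdN. exists (del N). split; auto.
    intros s Hs'. destruct (Ht (eta/2) ltac:(lra)) as [N1 HN1].
    set (k := Nat.max N1 (M N)).
    pose proof (HN1 k ltac:(unfold k; lia)). pose proof (HdN s (u k) Hs' (HM N k ltac:(unfold k; lia))).
    pose proof (Htri s (u k) t). lra.
Qed.

Lemma smooth_of isreal {K} (d : K -> K -> R) (Hd : is_metric d) (Hcomp : complete_metric d)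
  A (HA : closed_subalgebra isreal d A) (x : K -> Cx) :
  unit_sphere A x -> (forall n, Uset d n x) -> smooth_point isreal A x.
Proof.
  intros [Ax Hx1] HU.
  pose proof (A_bnd _ _ _ HA) as HAb. pose proof (A_scal _ _ _ HA) as HAs.
  pose proof HA as HA'. destruct HA' as [[HC [H0 [Hadd [Hsc Hmul]]]] Hcl].
  destruct (HC x Ax) as [_ [Hxc _]].
  destruct (peak_of_U d Hd Hcomp x (HAb x Ax) Hx1 HU Hxc) as [t [Hxt Hpk]].
  set (p := fst (x t)). set (q := snd (x t)).
  assert (Hpq : p ^ 2 + q ^ 2 = 1). { pose proof (Cmod_sq (x t)) as E. rewrite Hxt in E. fold p q in E. lra. }
  set (w := (p, - q)).
  assert (Hw : Cmod w = 1). { apply Cmod_unique. lra. unfold w; simpl. simpl in Hpq. nra. }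
  split; auto. split. lra.
  exists (fun f => Cmul (f t) w). split; [|split].
  - split; [|split; [|split]].
    + intros f Af. pose proof (HAs f t Af). pose proof (HAs x t Ax). unfold scalar in *.
      destruct isreal; auto. unfold Cmul, w; simpl. fold q in H1. rewrite H, H1. ring.
    + intros f g Af Ag. unfold fadd. apply Cx_eq; unfold Cmul, Cadd; simpl; ring.
    + intros c f Hc Af. unfold fscale. apply Cx_eq; unfold Cmul; simpl; ring.
    + intros f Af. rewrite Cmod_mul, Hw, Rmult_1_r. apply SN_ge'. auto.
  - unfold Cmul, w, Cre; simpl. fold p q. simpl in Hpq. lra.
  - intros psi [Hps [Hpadd [Hpsc Hpn]]] Hre.
    assert (Hpx : psi x = (1, 0)).
    { pose proof (Hpn x Ax). rewrite Hx1 in H. pose proof (Cmod_sq (psi x)).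
      pose proof (Cmod_nonneg (psi x)). unfold Cre in Hre.
      apply Cx_eq; simpl; auto. rewrite Hre in H1. nra. }
    assert (Hzero : forall f, A f -> f t = C0 -> psi f = C0).
    { intros f Af Hft. set (z := psi f).
      assert (Hz : forall eta, 0 < eta -> Cmod z <= eta).
      { intros eta He. destruct (Cmod_nonneg z) as [Hzp|Hz0]; [|lra].
        destruct (HC f Af) as [_ [Hfc _]].
        destruct (Hfc t eta He) as [rho [Hrho Hrho']].
        destruct (Hpk rho Hrho) as [del [Hdel Hdel']].
        set (F := supnorm f). assert (HF : 0 <= F) by (apply SN_nonneg'; auto).
        set (rr := del / (Cmod z * (F + 1))).
        assert (Hrr : 0 < rr) by (apply Rdiv_lt_0_compat; nra).
        set (cc := (rr * fst z, - rr * snd z)).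
        assert (Hcc_s : scalar isreal cc).
        { pose proof (Hps f Af). unfold scalar in *. destruct isreal; auto. unfold cc; simpl.
          fold z in H. rewrite H. ring. }
        assert (Hcc_m : Cmod cc = rr * Cmod z).
        { apply Cmod_unique. nra. transitivity (rr*rr*(Cmod z * Cmod z)). ring.
          rewrite Cmod_sq. unfold cc; simpl; ring. }
        set (Y := fadd x (fscale cc f)).
        assert (AY : A Y) by (apply Hadd; auto).
        assert (HpY : psi Y = (1 + rr * (Cmod z * Cmod z), 0)).
        { unfold Y. rewrite Hpadd, Hpsc, Hpx by auto. fold z. rewrite Cmod_sq.
          apply Cx_eq; unfold Cadd, Cmul, cc; simpl; ring. }
        assert (HYb : supnorm Y <= 1 + rr * Cmod z * eta).
        { apply SN_le; [|assert (0 <= rr * Cmod z * eta) by (apply Rmult_le_pos; [apply Rmult_le_pos|]; lra); lra]. intro s. unfold Y, fadd, fscale.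
          eapply Rle_trans. apply Cmod_add. rewrite Cmod_mul, Hcc_m.
          pose proof (SN_ge' x s (HAb x Ax)). rewrite Hx1 in H.
          destruct (Rlt_dec (1 - del) (Cmod (x s))) as [Hl|Hl].
          - pose proof (Hdel' s Hl). destruct Hd as [_ [_ [Hsym _]]]. rewrite Hsym in H1.
            pose proof (Hrho' s H1). rewrite Hft in H2.
            replace (Cadd (f s) (Copp C0)) with (f s) in H2 by (apply Cx_eq; unfold C0; simpl; ring).
            assert (0 <= rr * Cmod z) by (apply Rmult_le_pos; lra).
            assert (rr * Cmod z * Cmod (f s) <= rr * Cmod z * eta) by (apply Rmult_le_compat_l; lra).
            lra.
          - pose proof (SN_ge' f s (HAb f Af)). fold F in H1.
            assert (rr * Cmod z * Cmod (f s) <= rr * Cmod z * F)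
              by (apply Rmult_le_compat_l; nra).
            assert (rr * Cmod z * F <= del).
            { unfold rr. replace (del / (Cmod z * (F + 1)) * Cmod z * F) with (del * (F / (F+1))) by (field; lra).
              assert (F / (F+1) <= 1). { apply (Rmult_le_reg_r (F+1)). lra. unfold Rdiv.
                rewrite Rmult_assoc, Rinv_l by lra. lra. }
              nra. }
            assert (0 <= rr * Cmod z * eta) by (apply Rmult_le_pos; [apply Rmult_le_pos|]; lra). apply Rnot_lt_le in Hl. lra. }
        pose proof (Hpn Y AY). rewrite HpY, Cmod_real, Rabs_pos_eq in H by nra.
        assert (rr * Cmod z * Cmod z <= rr * Cmod z * eta) by lra.
        apply (Rmult_le_reg_l (rr * Cmod z)). nra. lra. }
      apply Cmod_eq0. apply Rle_antisym; [|apply Cmod_nonneg].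
      apply Rnot_lt_le; intro Hp. specialize (Hz (Cmod z / 2) ltac:(lra)). lra. }
    intros f Af. set (w' := Cmul (f t) w).
    set (g := fadd f (fscale (Copp w') x)).
    assert (Hs' : scalar isreal (Copp w')).
    { pose proof (HAs f t Af). pose proof (HAs x t Ax). unfold scalar in *.
      destruct isreal; auto. unfold w', Cmul, w, Copp; simpl. fold q in H1. rewrite H, H1. ring. }
    assert (Ag : A g) by (apply Hadd; auto).
    assert (Hgt : g t = C0).
    { unfold g, fadd, fscale, w', w, Cmul, Cadd, Copp, C0. simpl. fold p q.
      destruct (f t) as [f1 f2]. simpl. simpl in Hpq.
      apply Cx_eq; simpl.
      + replace f1 with (f1 * (p*(p*1) + q*(q*1))) at 1 by (rewrite Hpq; ring). ring.
      + replace f2 with (f2 * (p*(p*1) + q*(q*1))) at 1 by (rewrite Hpq; ring). ring. }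
    pose proof (Hzero g Ag Hgt). unfold g in H. rewrite Hpadd, Hpsc, Hpx in H by auto.
    assert (E1 := f_equal fst H). assert (E2 := f_equal snd H).
    unfold Cadd, Cmul, Copp, C0 in E1, E2; simpl in E1, E2.
    apply Cx_eq; unfold w', Cmul, w; simpl; fold p q in E1, E2; lra.
Qed.

Lemma SN_scale {K} (f : K -> Cx) a : bnd f -> 0 < a -> supnorm (fscale (a, 0) f) = a * supnorm f.
Proof. intros Bf Ha.
  assert (Hm : forall s, Cmod (fscale (a,0) f s) = a * Cmod (f s)).
  { intro s. unfold fscale. rewrite Cmod_mul, Cmod_real, Rabs_pos_eq; lra. }
  assert (Bs : bnd (fscale (a,0) f)).
  { destruct Bf as [M HM]. exists (a * M). intro s. rewrite Hm. apply Rmult_le_compat_l; auto; lra. }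
  pose proof (SN_nonneg' f Bf).
  apply Rle_antisym.
  - apply SN_le. intro s. rewrite Hm. apply Rmult_le_compat_l. lra. apply SN_ge'; auto. nra.
  - assert (supnorm f <= / a * supnorm (fscale (a,0) f)).
    { apply SN_le. intro s. pose proof (SN_ge' _ s Bs). rewrite Hm in H0.
      apply (Rmult_le_reg_l a). auto. rewrite <- Rmult_assoc, Rinv_r, Rmult_1_l by lra. auto.
      pose proof (SN_nonneg' _ Bs). apply Rmult_le_pos; auto. left; apply Rinv_0_lt_compat; auto. }
    apply (Rmult_le_compat_l a) in H0; [|lra]. rewrite <- Rmult_assoc, Rinv_r, Rmult_1_l in H0 by lra. auto.
Qed.

Definition iter_seq {T} (x0 : T) (F : nat -> T -> T) : nat -> T :=
  fix it k := match k with O => x0 | S k => F k (it k) end.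

Lemma density isreal {K} (d : K -> K -> R) (Hd : is_metric d) A
  (HA : closed_subalgebra isreal d A) (Hnorm : norming A (strong_peak_points isreal d A))
  x eps : unit_sphere A x -> 0 < eps ->
  exists g, (unit_sphere A g /\ forall n, Uset d n g) /\ supnorm (fsub g x) < eps.
Proof.
  intros [Ax Hx1] He.
  pose proof (A_bnd _ _ _ HA) as HAb. pose proof (A_scal _ _ _ HA) as HAs.
  pose proof HA as HA'. destruct HA' as [[HC [H0 [Hadd [Hsc Hmul]]]] Hcl].
  set (r0 := Rmin (eps/4) (1/2)).
  assert (Hr0 : 0 < r0 <= 1/2 /\ r0 <= eps/4).
  { unfold r0. split; [split|]. apply Rmin_glb_lt; lra. apply Rmin_r. apply Rmin_l. }
  assert (Hstep : forall np : nat * ((K -> Cx) * R), exists p' : (K -> Cx) * R,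
    (A (fst (snd np)) /\ 0 < snd (snd np) /\ snd (snd np) < supnorm (fst (snd np))) ->
    A (fst p') /\ 0 < snd p' /\ snd p' <= snd (snd np) / 2 /\
    supnorm (fsub (fst p') (fst (snd np))) < snd (snd np) / 4 /\
    (forall y, A y -> supnorm (fsub y (fst p')) < snd p' -> Uset d (fst np) y)).
  { intros [n [h r]]. simpl. destruct (classic (A h /\ 0 < r /\ r < supnorm h)) as [[Ah [Hr Hrh]]|Hn].
    - destruct (dense_step isreal d Hd A HA Hnorm n h (r/4) Ah ltac:(lra) ltac:(lra)) as [h' [Ah' [HU Hh']]].
      destruct (U_open d A n HAb h' Ah' HU) as [e' [He' Hop]].
      exists (h', Rmin (r/2) e'). simpl. intros _. split; [auto|split;[|split;[|split]]].
      + apply Rmin_glb_lt; lra.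
      + apply Rmin_l.
      + auto.
      + intros y Ay Hy. apply Hop; auto. eapply Rlt_le_trans; [apply Hy| apply Rmin_r].
    - exists (h, r). intro; contradiction. }
  apply choice_fun in Hstep. destruct Hstep as [F HF].
  set (sq := iter_seq (x, r0) (fun k p => F (k, p))).
  set (h := fun k => fst (sq k)). set (r := fun k => snd (sq k)).
  assert (Hsq : forall k, sq (S k) = F (k, sq k)) by (intro; reflexivity).
  assert (Inv : forall k, A (h k) /\ 0 < r k /\ r k <= r0 /\ supnorm (fsub (h k) x) <= r0/2 - r k/2).
  { induction k.
    - unfold h, r; simpl. split; auto. split. lra. split. lra.
      apply SN_le. intro s. unfold fsub. rewrite Cmod_self. lra. lra.
    - destruct IHk as [Ahk [Hrk [Hrk0 Hdk]]].
      assert (Hpre : r k < supnorm (h k)).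
      { pose proof (SN_rev (h k) x (HAb _ Ahk) (HAb _ Ax)).
        rewrite (SN_sym x (h k)) in H by (apply HAb; auto). lra. }
      destruct (HF (k, sq k) (conj Ahk (conj Hrk Hpre))) as [A1 [A2 [A3 [A4 _]]]].
      simpl in A3, A4. change (snd (sq k)) with (r k) in A3, A4. change (fst (sq k)) with (h k) in A4.
      unfold h, r. rewrite Hsq. split; auto. split; auto. split. lra.
      pose proof (SN_tri (fst (F (k, sq k))) (h k) x (HAb _ A1) (HAb _ Ahk) (HAb _ Ax)). lra. }
  assert (Hpost : forall k, A (h (S k)) /\ 0 < r (S k) /\ r (S k) <= r k / 2 /\
    supnorm (fsub (h (S k)) (h k)) < r k / 4 /\
    (forall y, A y -> supnorm (fsub y (h (S k))) < r (S k) -> Uset d k y)).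
  { intro k. destruct (Inv k) as [Ahk [Hrk [Hrk0 Hdk]]].
    assert (Hpre : r k < supnorm (h k)).
    { pose proof (SN_rev (h k) x (HAb _ Ahk) (HAb _ Ax)).
      rewrite (SN_sym x (h k)) in H by (apply HAb; auto). lra. }
    unfold h, r. rewrite Hsq. apply (HF (k, sq k) (conj Ahk (conj Hrk Hpre))). }
  destruct (complete_lim isreal d A HA h r (fun k => proj1 (Inv k)) (fun k => proj1 (proj2 (Inv k)))
    (fun k => proj1 (proj2 (proj2 (Hpost k)))) (fun k => proj1 (proj2 (proj2 (proj2 (Hpost k))))))
    as [g [Ag Hg]].
  assert (HgU : forall n, Uset d n g).
  { intro n. destruct (Hpost n) as [_ [_ [_ [_ HU]]]]. apply HU; auto. }
  assert (Hgx : supnorm (fsub g x) < r0) by (apply (Hg 0%nat)).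
  pose proof (HAb g Ag) as Bg. pose proof (HAb x Ax) as Bx.
  set (N := supnorm g).
  assert (HN1 : N <= 1 + supnorm (fsub g x)) by (rewrite <- Hx1; apply SN_rev; auto).
  assert (HN2 : 1 <= N + supnorm (fsub g x)).
  { rewrite <- Hx1, (SN_sym g x) by auto. apply SN_rev; auto. }
  assert (HNp : 0 < N) by lra.
  set (g' := fscale (/ N, 0) g).
  assert (Ag' : A g').
  { apply Hsc; auto. unfold scalar; destruct isreal; simpl; auto. }
  assert (Hg'm : forall s, Cmod (g' s) = / N * Cmod (g s)).
  { intro s. unfold g', fscale. rewrite Cmod_mul, Cmod_real, Rabs_pos_eq; auto.
    left; apply Rinv_0_lt_compat; auto. }
  assert (Hg'1 : supnorm g' = 1).
  { unfold g'. rewrite SN_scale; auto. unfold N; field. fold N; lra. apply Rinv_0_lt_compat; auto. }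
  exists g'. split; [split; [split; auto|]|].
  - intro n. destruct (HgU n) as [del [Hdel Hdd]]. exists (del / N). split.
    apply Rdiv_lt_0_compat; auto. rewrite Hg'1. intros s1 s2 H1 H2. apply Hdd.
    + rewrite Hg'm in H1. fold N. apply (Rmult_lt_reg_l (/ N)). apply Rinv_0_lt_compat; auto.
      replace (/ N * (N - del)) with (1 - del / N) by (field; lra). auto.
    + rewrite Hg'm in H2. fold N. apply (Rmult_lt_reg_l (/ N)). apply Rinv_0_lt_compat; auto.
      replace (/ N * (N - del)) with (1 - del / N) by (field; lra). auto.
  - apply Rle_lt_trans with (2 * supnorm (fsub g x)); [|lra].
    pose proof (SN_nonneg' (fsub g x) (bnd_sub _ _ Bg Bx)).
    apply SN_le; [|lra]. intro s. change (Cmod (fsub g' x s)) with (Cmod (Cadd (g' s) (Copp (x s)))). eapply Rle_trans. apply (Cdist_tri _ (g s)).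
    assert (E : Cadd (g' s) (Copp (g s)) = Cmul (/N - 1, 0) (g s)).
    { unfold g', fscale. apply Cx_eq; unfold Cmul, Cadd, Copp; simpl; ring. }
    rewrite E, Cmod_mul, Cmod_real.
    pose proof (SN_ge' (fsub g x) s (bnd_sub _ _ Bg Bx)).
    assert (Rabs (/ N - 1) * Cmod (g s) <= supnorm (fsub g x)).
    { pose proof (SN_ge' g s Bg). fold N in H2.
      apply Rle_trans with (Rabs (/ N - 1) * N). apply Rmult_le_compat_l; auto. apply Rabs_pos.
      rewrite <- (Rabs_pos_eq N) at 2 by lra. rewrite <- Rabs_mult.
      replace ((/ N - 1) * N) with (1 - N) by (field; lra).
      apply Rabs_le. lra. }
    change (fsub g x s) with (Cadd (g s) (Copp (x s))) in H1. lra.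
Qed.

Theorem corollary2p2 (isreal : bool) (K : Type) (d : K -> K -> R)
  (Hd : is_metric d) (Hcomp : complete_metric d)
  (A : (K -> Cx) -> Prop) (HA : closed_subalgebra isreal d A)
  (Hnorm : norming A (strong_peak_points isreal d A)) :
  exists G : (K -> Cx) -> Prop,
    dense_Gdelta_in A (unit_sphere A) G /\
    (forall x, G x -> smooth_point isreal A x).
Proof.
  exists (fun x => unit_sphere A x /\ forall n, Uset d n x). split.
  - split; [|split].
    + intros x [Hx _]; auto.
    + exists (Uset d). split.
      * intro n. apply U_open. apply (A_bnd _ _ _ HA).
      * intro x; tauto.
    + intros x eps Hx He. destruct (density isreal d Hd A HA Hnorm x eps Hx He) as [g [Hg Hgx]].
      exists g; auto.
  - intros x [Hx HU]. apply (smooth_of isreal d Hd Hcomp A HA x Hx HU).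
Qed.
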